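(* Let $\mu$ be a finite positive measure on $(\Omega,\mathcal B)$ with (countably many) atoms $A_1,A_2,\dots$ arranged so that $\mu(A_n)\ge\mu(A_{n+1})$, and let $C$ be the complement of the union of the atoms. For each $n$ put $B_n=C\cup\bigcup_{j>n}A_j$. Let $Z$ be a linear subspace of $L_\infty(\mu)$ which contains $L^0_\infty(C,\mu)=\{f\in L_\infty(\mu): f=0 \text{ off } C,\ \int f\,d\mu=0\}$ and contains the function $1_{A_n}-\frac{\mu(A_n)}{\mu(B_n)}1_{B_n}$ for every $n$ with $\mu(B_n)>0$. Then the weak$^*$ closure of $Z$ in $L_\infty(\mu)$ contains $L^0_\infty=\{f\in L_\infty(\mu):\int f\,d\mu=0\}$.
   Context: An atom of $\mu$ is a set $A$ with $\mu(A)>0$ such that each measurable subset of $A$ has measure $0$ or $\mu(A)$. The weak$^*$ topology on $L_\infty(\mu)$ is $\sigma(L_\infty,L_1)$. *)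

(* Defs.v *)
From HB Require Import structures.
From mathcomp Require Import all_boot all_order all_algebra.
From mathcomp Require Import all_classical all_reals all_analysis.
Set Implicit Arguments. Unset Strict Implicit. Unset Printing Implicit Defensive.
Import Order.TTheory GRing.Theory Num.Theory.
Local Open Scope classical_set_scope.
Local Open Scope ring_scope.

Section Defs.
Context (d : measure_display) (T : measurableType d) (R : realType).
Variable mu : {measure set T -> \bar R}.

Definition is_atom (A : set T) : Prop :=
  measurable A /\ (0 < mu A)%E /\
  forall B, measurable B -> B `<=` A -> mu B = 0%E \/ mu B = mu A.

(* Elements of L_infty(mu) represented by measurable, essentially bounded
   functions (classes modulo mu-a.e. equality). *)
Definition Linf_fun (f : T -> R) : Prop :=
  measurable_fun setT f /\ exists M : R, {ae mu, forall x, `|f x| <= M}.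

Definition ae_equal (f g : T -> R) : Prop := {ae mu, forall x, f x = g x}.

(* f is in the sigma(L_infty, L_1)-closure of Z: every basic weak*
   neighbourhood {h : |int (h - f) g_i| < e, i < k} (g_i in L_1) meets Z. *)
Definition weakstar_closure (Z : set (T -> R)) (f : T -> R) : Prop :=
  forall (k : nat) (g : 'I_k -> T -> R) (e : R), 0 < e ->
    (forall i, mu.-integrable setT (EFin \o g i)) ->
    exists2 z, Z z &
      forall i, (`| \int[mu]_x ((f x - z x) * g i x)%:E | < e%:E)%E.

End Defs.

(* Index set of the atoms: None = infinitely many atoms (indices 0,1,2,...),
   Some k = exactly k atoms (indices 0..k-1). *)
Definition atom_idx (N : option nat) (n : nat) : Prop :=
  if N is Some k then (n < k)%N else True.

(* Main.v *)
Require Import Defs.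
From HB Require Import structures.
From mathcomp Require Import all_boot all_order all_algebra.
From mathcomp Require Import all_classical all_reals all_analysis.
From mathcomp Require Import ring lra measurable_realfun.
Import Order.TTheory GRing.Theory Num.Theory.
Local Open Scope classical_set_scope.
Local Open Scope ring_scope.



Section General.
Context (d : measure_display) (T : measurableType d) (R : realType).
Variable mu : {measure set T -> \bar R}.
Hypothesis mufin : (mu setT < +oo)%E.

Lemma mfin {X} : measurable X -> (mu X < +oo)%E.
Proof. by move=> mX; apply: le_lt_trans mufin; rewrite le_measure ?inE. Qed.

Lemma mfinnum {X} : measurable X -> mu X \is a fin_num.
Proof. by move=> mX; rewrite ge0_fin_numE ?mfin. Qed.

Lemma mle (f : T -> R) t : measurable_fun setT f -> measurable [set x | f x <= t].
Proof.
move=> mf; have := mf measurableT _ (measurable_itv `]-oo, t]).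
rewrite setTI; congr measurable; apply/seteqP; split => x /=;
  by rewrite in_itv /=.
Qed.

Lemma mgt (f : T -> R) t : measurable_fun setT f -> measurable [set x | t < f x].
Proof.
move=> mf; have := mf measurableT _ (measurable_itv `]t, +oo[).
rewrite setTI; congr measurable; apply/seteqP; split => x /=;
  by rewrite in_itv /= andbT.
Qed.

Lemma ae_null E : measurable E -> mu E = 0%E -> {ae mu, forall x, ~ E x}.
Proof. by move=> mE E0; exists E; split => // x /= /contrapT. Qed.

Lemma null_sub (V : nat -> set T) (X : set T) : measurable X ->
  (forall n, measurable (V n)) -> (forall n, mu (V n) = 0%E) ->
  X `<=` \bigcup_n V n -> mu X = 0%E.
Proof.
move=> mX mV V0 XV.
apply: measure_negligible => //; apply: (negligibleS XV).
by apply: negligible_bigcup => n; exists (V n); split.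
Qed.

Lemma atom_ae_const (A : set T) (f : T -> R) : is_atom mu A ->
  measurable_fun setT f -> exists a, {ae mu, forall x, A x -> f x = a}.
Proof.
move=> [mA [A0 hA]] mf.
pose L t := A `&` [set x | f x <= t].
pose U t := A `&` [set x | t < f x].
have mL t : measurable (L t) by apply: measurableI => //; exact: mle.
have mU t : measurable (U t) by apply: measurableI => //; exact: mgt.
have LA t : mu (L t) = 0%E \/ mu (L t) = mu A by apply: hA => //; exact: subIsetl.
have UA t : mu (U t) = 0%E \/ mu (U t) = mu A by apply: hA => //; exact: subIsetl.
have finA := mfinnum mA.
have LU t : mu (L t) = mu A -> mu (U t) = 0%E.
  move=> LtA; have -> : U t = A `\` L t.
    apply/seteqP; split => x /=.
      move=> [Ax /= ltx]; split; first done.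
      by move=> [_ /= fxt]; move: ltx; rewrite ltNge fxt.
    move=> [Ax nL]; split => //=; rewrite ltNge; apply/negP => fxt; exact: nL.
  rewrite measureD ?mfin //.
  have -> : A `&` L t = L t by apply/seteqP; split => x /= => [[]|[]].
  by transitivity (mu A - mu A)%E; [congr (_ - _)%E; exact: LtA | exact: subee].
have Apos : ~ mu A = 0%E by move=> h; move: A0; rewrite h ltxx.
have [t0 Lt0] : exists t0, mu (L t0) = mu A.
  apply: contrapT => hn; apply: Apos.
  apply: (@null_sub (fun n : nat => L n%:R)) => // [n|].
    by case: (LA n%:R) => // h; exfalso; apply: hn; exists n%:R.
  move=> x Ax; exists `|Num.ceil (f x)|%N => //; split => //=.
  apply: (le_trans (ceil_ge _)); rewrite natr_absz ler_int; exact: ler_norm.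
pose S := [set t | mu (L t) = 0%E].
have [s0 Ss0] : exists s0, S s0.
  apply: contrapT => hn; apply: Apos.
  apply: (@null_sub (fun n : nat => U (- n%:R))) => // [n|].
    apply: LU; case: (LA (- n%:R)) => // h; exfalso; apply: hn; by exists (- n%:R).
  move=> x Ax; exists `|Num.ceil (- f x)|%N.+1 => //; split => //=.
  rewrite ltrNl; apply: (le_lt_trans (ceil_ge _)).
  rewrite -natr1 natr_absz; apply: (@le_lt_trans _ _ `|Num.ceil (- f x)|%:~R).
    by rewrite ler_int; exact: ler_norm.
  by rewrite ltrDl.
have ubS : forall s, S s -> s <= t0.
  move=> s Ss; rewrite leNgt; apply/negP => st0; apply: Apos.
  apply/eqP; rewrite -Lt0 eq_le measure_ge0 andbT -Ss le_measure ?inE //.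
  by move=> x [Ax /= fx]; split => //=; apply: (le_trans fx); exact: ltW.
have hsup : has_sup S by split; [exists s0 | exists t0 => s /ubS].
pose a := sup S.
exists a.
have h4 n : {ae mu, forall x, ~ L (a - n.+1%:R^-1) x}.
  apply: ae_null => //.
  have wpos : 0 < n.+1%:R^-1 :> R by rewrite invr_gt0.
  have [s Ss ls] := sup_adherent wpos hsup.
  apply/eqP; rewrite eq_le measure_ge0 andbT -Ss le_measure ?inE //.
  by move=> x [Ax /= fx]; split => //=; apply: (le_trans fx); exact: ltW.
have h5 n : {ae mu, forall x, ~ U (a + n.+1%:R^-1) x}.
  apply: ae_null => //; apply: LU.
  case: (LA (a + n.+1%:R^-1)) => // h; exfalso.
  have := sup_upper_bound hsup h; rewrite -/a => H.
  have : 0 < n.+1%:R^-1 :> R by rewrite invr_gt0.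
  move: H; rewrite /a; move: (n.+1%:R^-1) => w; move: (sup S) => y; lra.
apply: filterS2 (ae_foralln h4) (ae_foralln h5) => x H4 H5 Ax.
apply/eqP; rewrite eq_le; apply/andP; split.
  rewrite leNgt; apply/negP => /ltr_add_invr [k hk].
  by apply: (H5 k); split => //.
rewrite leNgt; apply/negP => /ltr_add_invr [k hk].
apply: (H4 k); split => //=; rewrite lerBrDr; exact: ltW.
Qed.
End General.



Section Main.
Context (d : measure_display) (T : measurableType d) (R : realType).
Variable mu : {measure set T -> \bar R}.
Variables (N : option nat) (A : nat -> set T).
Hypothesis mufin : (mu setT < +oo)%E.
Hypothesis hatom : forall n, atom_idx N n -> is_atom mu (A n).
Hypothesis hdisj : forall n m, atom_idx N n -> atom_idx N m -> n <> m -> A n `&` A m = set0.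

Let mfin' {X} (mX : measurable X) := @mfin _ _ _ mu mufin X mX.
Let mfinnum' {X} (mX : measurable X) := @mfinnum _ _ _ mu mufin X mX.

Definition Cset := ~` \bigcup_(n in [set n | atom_idx N n]) A n.
Definition Tl M := \bigcup_(j in [set j | atom_idx N j /\ (M <= j)%N]) A j.

Lemma mA n : atom_idx N n -> measurable (A n).
Proof. by case/hatom. Qed.

Lemma mC : measurable Cset.
Proof. by apply: measurableC; apply: bigcup_measurable => k; exact: mA. Qed.

Lemma mTl M : measurable (Tl M).
Proof. by apply: bigcup_measurable => k [] /mA. Qed.

Lemma disjA {n m x} : atom_idx N n -> atom_idx N m -> A n x -> A m x -> n = m.
Proof.
move=> In Im Anx Amx; apply: contrapT => nm.
by have := hdisj n m In Im nm; rewrite -subset0 => /(_ x); apply.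
Qed.

Lemma AC {n x} : atom_idx N n -> A n x -> ~ Cset x.
Proof. by move=> In Ax; apply; exists n. Qed.

Lemma TlC M x : Tl M x -> ~ Cset x.
Proof. by move=> [j [Ij _] Ax]; exact: AC Ax. Qed.

Lemma ATl n M x : atom_idx N n -> (n < M)%N -> A n x -> ~ Tl M x.
Proof.
move=> In nM Ax [j [Ij Mj] Ajx].
have nj := disjA In Ij Ax Ajx; move: nM; rewrite nj ltnNge Mj.
by [].
Qed.

Lemma TlS M : atom_idx N M -> Tl M = A M `|` Tl M.+1.
Proof.
move=> IM; apply/seteqP; split => x.
  move=> [j [Ij Mj] Ajx]; have [jM|jM] := eqVneq j M; first by left; rewrite -jM.
  by right; exists j => //; split => //; rewrite ltn_neqAle eq_sym jM.
by move=> [AMx|[j [Ij Mj] Ajx]]; [exists M|exists j => //; split => //; exact: ltnW].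
Qed.

Lemma TlSn M : ~ atom_idx N M -> Tl M = Tl M.+1.
Proof.
move=> IM; apply/seteqP; split => x.
  move=> [j [Ij Mj] Ajx]; exists j => //; split => //.
  by rewrite ltn_neqAle Mj andbT; apply/eqP => jM; apply: IM; rewrite jM.
by move=> [j [Ij Mj] Ajx]; exists j => //; split => //; exact: ltnW.
Qed.

Lemma ATlS M x : atom_idx N M -> A M x -> ~ Tl M.+1 x.
Proof. by move=> IM; apply: ATl. Qed.

Lemma Tl0 : Tl 0 = ~` Cset.
Proof.
rewrite /Cset setCK; apply/seteqP; split => x [j].
  by move=> [Ij _] Ax; exists j.
by move=> Ij Ax; exists j.
Qed.

Lemma Tl_cap : \bigcap_M Tl M = set0.
Proof.
rewrite -subset0 => x Hx.
have [j [Ij _] Ajx] := Hx 0%N I.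
have [j' [Ij' jj'] Aj'x] := Hx j.+1 I.
have := disjA Ij Ij' Ajx Aj'x => e; move: jj'; rewrite e ltnn.
by [].
Qed.

Lemma Tl_noninc : {homo Tl : n m / (n <= m)%N >-> (m <= n)%O}.
Proof.
move=> n m nm; rewrite asboolE => x [j [Ij mj] Ax]; exists j => //; split => //.
exact: leq_trans mj.
Qed.

Lemma Tl_small (e : R) : 0 < e -> \forall M \near \oo, (mu (Tl M) < e%:E)%E.
Proof.
move=> e0.
have := @nonincreasing_cvg_mu _ _ _ mu Tl (mfin' (mTl 0)) mTl _ Tl_noninc.
rewrite Tl_cap measure0 => /(_ measurable0) /fine_cvgP [_ H].
have HH := cvgr_lt 0 H e e0.
near=> M; rewrite -(fineK (mfinnum' (mTl M))) lte_fin.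
near: M; exact: HH.
Unshelve. all: by end_near.
Qed.

End Main.



Section ZSec.
Context (d : measure_display) (T : measurableType d) (R : realType).
Variable mu : {measure set T -> \bar R}.
Variables (N : option nat) (A : nat -> set T) (Z : set (T -> R)).
Hypothesis mufin : (mu setT < +oo)%E.
Hypothesis mupos : (0 < mu setT)%E.
Hypothesis hatom : forall n, atom_idx N n -> is_atom mu (A n).
Hypothesis hdisj : forall n m, atom_idx N n -> atom_idx N m -> n <> m -> A n `&` A m = set0.
Local Notation C := (@Cset d T N A).
Local Notation TL := (@Tl d T N A).
Hypothesis hZ0 : Z (fun _ => 0).
Hypothesis hZadd : forall z1 z2, Z z1 -> Z z2 -> Z (fun x => z1 x + z2 x).
Hypothesis hZscale : forall (a : R) z, Z z -> Z (fun x => a * z x).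
Hypothesis hZC : forall f, Linf_fun mu f -> (forall x, ~ C x -> f x = 0) ->
     (\int[mu]_x (f x)%:E = 0)%E -> exists2 z, Z z & ae_equal mu z f.
Hypothesis hZgen : forall n, atom_idx N n -> (0 < mu (C `|` TL n.+1))%E ->
     exists2 z, Z z & ae_equal mu z
       (fun x => \1_(A n) x - fine (mu (A n)) / fine (mu (C `|` TL n.+1)) * \1_(C `|` TL n.+1) x).

Let mfin' {X} (mX : measurable X) := @mfin _ _ _ mu mufin X mX.
Let mfinnum' {X} (mX : measurable X) := @mfinnum _ _ _ mu mufin X mX.

Definition Zae h := exists2 z, Z z & ae_equal mu z h.
Definition bnd (h : T -> R) := exists M, forall x, `|h x| <= M.

Lemma Zae_ae {h h'} : Zae h -> {ae mu, forall x, h x = h' x} -> Zae h'.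
Proof.
move=> [z Zz zh] hh'; exists z => //; rewrite /ae_equal.
by apply: filterS2 zh hh' => x -> ->.
Qed.

Lemma Zae_eq {h h'} : Zae h -> (forall x, h x = h' x) -> Zae h'.
Proof. by move=> Zh hh'; apply: Zae_ae Zh _; apply: aeW. Qed.

Lemma Zae_add {h1 h2} : Zae h1 -> Zae h2 -> Zae (fun x => h1 x + h2 x).
Proof.
move=> [z1 Z1 e1] [z2 Z2 e2]; exists (fun x => z1 x + z2 x); first exact: hZadd.
by rewrite /ae_equal; apply: filterS2 e1 e2 => x -> ->.
Qed.

Lemma Zae_scale a h : Zae h -> Zae (fun x => a * h x).
Proof.
move=> [z Z1 e1]; exists (fun x => a * z x); first exact: hZscale.
by rewrite /ae_equal; apply: filterS e1 => x ->.
Qed.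

Lemma bnd_Linf {h} : measurable_fun setT h -> bnd h -> Linf_fun mu h.
Proof. by move=> mh [M hM]; split => //; exists M; apply: aeW. Qed.

Lemma int_bnd {h} : measurable_fun setT h -> bnd h ->
  mu.-integrable setT (EFin \o h).
Proof.
move=> mh [M hM]; apply: measurable_bounded_integrable => //.
rewrite /bounded_near; near=> M'.
move=> x _ /=; apply: (le_trans (hM x)); near: M'.
apply: nbhs_pinfty_ge; exact: num_real.
Unshelve. all: by end_near.
Qed.

Lemma int_indic X : measurable X -> (\int[mu]_x (\1_X x)%:E = mu X)%E.
Proof. by move=> mX; rewrite integral_indic // setIT. Qed.


Let mC' := @mC d T R mu N A hatom.
Let mTl' := @mTl d T R mu N A hatom.
Let mA' := @mA d T R mu N A hatom.
Let AC' {n x} := @AC d T N A n x.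
Let ATl' {n M x} := @ATl d T N A hdisj n M x.
Let ATlS' {M x} := @ATlS d T N A hdisj M x.
Let disjA' {n m x} := @disjA d T N A hdisj n m x.
Let TlS' {M} := @TlS d T N A M.
Let TlSn' {M} := @TlSn d T N A M.
Let ae_null' {E} := @ae_null d T R mu E.

Lemma ind1 (X : set T) x : X x -> \1_X x = 1 :> R.
Proof. by move=> Xx; rewrite indicE mem_set. Qed.
Lemma ind0 (X : set T) x : ~ X x -> \1_X x = 0 :> R.
Proof. by move=> Xx; rewrite indicE memNset. Qed.
Lemma indb (X : set T) x : `|\1_X x| <= 1 :> R.
Proof. by rewrite indicE; case: (_ \in _); rewrite ?normr1 ?normr0. Qed.

Lemma int_ind X : measurable X -> mu.-integrable setT (EFin \o \1_X).
Proof.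
move=> mX; apply: int_bnd; first exact: measurable_indic.
by exists 1 => x; exact: indb.
Qed.

Lemma int_scal X (r : R) : measurable X ->
  (\int[mu]_x ((r * \1_X x)%:E) = r%:E * mu X)%E.
Proof.
move=> mX; under eq_integral do rewrite EFinM.
by rewrite integralZl //; [rewrite int_indic | exact: int_ind].
Qed.

Lemma PM M : forall h, measurable_fun setT h -> bnd h -> (\int[mu]_x (h x)%:E = 0)%E ->
  (forall n, (n < M)%N -> atom_idx N n -> exists a, {ae mu, forall x, A n x -> h x = a}) ->
  forall be, {ae mu, forall x, TL M x -> h x = be} ->
  (\int[mu]_(x in C) (h x)%:E = (be * fine (mu C))%:E)%E -> Zae h.
Proof.
elim: M => [|M IH] h mh bh h0 hc be hT hCint.
- have ih := int_bnd mh bh.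
  have mCc : measurable (~` C) by apply: measurableC.
  have hsplit : (\int[mu]_x (h x)%:E =
      \int[mu]_(x in C) (h x)%:E + \int[mu]_(x in ~` C) (h x)%:E)%E.
    rewrite -integral_setU //; last 2 first.
    - by rewrite setUv; exact/measurable_EFinP.
    - exact/disj_setPCl.
    by rewrite setUv.
  have hnc : (\int[mu]_(x in ~` C) (h x)%:E = (be%:E * mu (~` C)))%E.
    rewrite -integral_cst //; apply: ae_eq_integral => //.
    + by apply/measurable_EFinP; exact: measurable_funS mh.
    + move: hT; rewrite Tl0; apply: filterS => x H Cx; by rewrite H.
  have be0 : be = 0.
    move: h0; rewrite hsplit hCint hnc -(fineK (mfinnum' mCc)) -EFinM -EFinD.
    move=> /eqP; rewrite eqe -mulrDr mulf_eq0 => /orP[/eqP//|].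
    rewrite -fineD ?mfinnum' // -measureU //; last by rewrite setICr.
    rewrite setUv => /eqP H0; exfalso; move: mupos.
    by rewrite -(fineK (mfinnum' measurableT)) H0 ltxx.
  pose h0' x := \1_C x * h x.
  have aeh : {ae mu, forall x, h0' x = h x}.
    move: hT; rewrite Tl0; apply: filterS => x H; rewrite /h0'.
    case: (pselect (C x)) => Cx; first by rewrite ind1 // mul1r.
    by rewrite ind0 // mul0r H // be0.
  suff Zh0 : Zae h0' by exact: (Zae_ae Zh0 aeh).
  have mh0 : measurable_fun setT h0'.
    have := measurable_funM (measurable_indic mC') mh.
    by [].
  apply: hZC.
  + apply: bnd_Linf => //; case: bh => K hK; exists K => x; rewrite /h0' normrM.
    by apply: (le_trans _ (hK x)); rewrite ler_piMl // indb.
  + by move=> x Cx; rewrite /h0' ind0 // mul0r.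
  + rewrite -h0; apply: ae_eq_integral => //.
    + exact/measurable_EFinP.
    + exact/measurable_EFinP.
    + by apply: filterS aeh => x ->.
case: (pselect (atom_idx N M)) => IM; last first.
  apply: (IH h mh bh h0 _ be) => //.
  + by move=> n nM In; apply: hc => //; exact: ltnW.
  + by rewrite (TlSn' IM).
have [b hb] := hc M (ltnSn M) IM.
have mBt : measurable (C `|` TL M.+1) by apply: measurableU.
case: (pselect (0 < mu (C `|` TL M.+1))%E) => Bpos; last first.
  have B0 : mu (C `|` TL M.+1) = 0%E.
    by apply/eqP; rewrite eq_le measure_ge0 andbT leNgt; apply/negP.
  have C0 : mu C = 0%E.
    by apply/eqP; rewrite eq_le measure_ge0 andbT -B0 le_measure ?inE//; exact: subsetUl.
  apply: (IH h mh bh h0 _ b).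
  + by move=> n nM In; apply: hc => //; exact: ltnW.
  + have := ae_null' mBt B0.
    rewrite (TlS' IM); apply: filterS2 hb => x H1 H2 [AMx|TMx]; first exact: H1.
    by exfalso; apply: H2; right.
  + rewrite null_set_integral //; last by apply/measurable_EFinP; exact: measurable_funS mh.
    by rewrite C0 /= mulr0.
set Bt := C `|` TL M.+1.
set r := fine (mu (A M)) / fine (mu Bt).
have mAM := mA' M IM.
have fBpos : 0 < fine (mu Bt) by rewrite fine_gt0 // Bpos /= mfin'.
have r0 : 0 <= r by rewrite divr_ge0 // fine_ge0 // measure_ge0.
pose G x := \1_(A M) x - r * \1_Bt x.
have ZG : Zae G by exact: hZgen M IM Bpos.
have mG : measurable_fun setT G.
  have := measurable_funB (measurable_indic mAM)
    (measurable_funM (measurable_cst r) (measurable_indic mBt)).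
  by [].
have bG : bnd G.
  exists (1 + r) => x; rewrite /G (le_trans (ler_normB _ _)) // lerD ?indb //.
  by rewrite normrM ger0_norm // ler_piMr // indb.
have intG : (\int[mu]_x (G x)%:E = 0)%E.
  under eq_integral do rewrite /G EFinB.
  rewrite integralB_EFin //; last first.
    apply: int_bnd.
    - exact: (measurable_funM (measurable_cst r) (measurable_indic mBt)).
    - by exists r => x; rewrite normrM ger0_norm // ler_piMr // indb.
    - exact: int_ind.
  rewrite int_indic // int_scal // -(fineK (mfinnum' mAM)) -(fineK (mfinnum' mBt)).
  by rewrite -EFinM -EFinB /r divfK ?subrr // gt_eqF.
have r1 : 1 + r != 0 by rewrite gt_eqF // ltr_wpDr.
set x0 := (b - be) / (1 + r).
have ex0 : x0 * (1 + r) = b - be by rewrite /x0 divfK.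
pose h' x := h x - x0 * G x.
have mxG : measurable_fun setT (fun x => x0 * G x).
  by have := measurable_funM (measurable_cst x0) mG.
have mh' : measurable_fun setT h' by have := measurable_funB mh mxG.
have bxG : bnd (fun x => x0 * G x).
  by case: bG => K hK; exists (`|x0| * K) => x; rewrite normrM ler_wpM2l.
have ixG := int_bnd mxG bxG.
have ih := int_bnd mh bh.
have GA n x : atom_idx N n -> (n < M)%N -> A n x -> G x = 0.
  move=> In nM Anx; rewrite /G !ind0 ?mulr0 ?subr0 //.
  - move=> [Cx|Tx]; first exact: (AC' In Anx).
    exact: (@ATl' n M.+1 x In (ltnW nM) Anx Tx).
  - move=> AMx; have := disjA' In IM Anx AMx => nM'.
    by move: nM; rewrite nM' ltnn.
have GAM x : A M x -> G x = 1.
  move=> AMx; rewrite /G ind1 // ind0 ?mulr0 ?subr0 //.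
  move=> [Cx|Tx]; first exact: (AC' IM AMx).
  exact: (ATlS' IM AMx).
have GB x : Bt x -> G x = - r.
  move=> Bx; rewrite /G (@ind1 Bt x Bx) (@ind0 (A M) x) ?mulr1 ?sub0r //.
  move=> AMx; case: Bx => [Cx|Tx]; first exact: (AC' IM AMx).
  exact: (ATlS' IM AMx).
have Zh' : Zae h'.
  apply: (IH h' mh' _ _ _ (be + x0 * r)).
  - case: bh => K hK; case: bxG => K' hK'; exists (K + K') => x.
    by rewrite /h' (le_trans (ler_normB _ _)) // lerD.
  - under eq_integral do rewrite /h' EFinB.
    rewrite integralB_EFin // h0.
    under eq_integral do rewrite EFinM.
    rewrite integralZl //; last exact: (int_bnd mG bG).
    transitivity (0 - x0%:E * 0)%E; first by congr (_ - _ * _)%E; exact: intG.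
    by rewrite mule0 sube0.
  - move=> n nM In; have [a Ha] := hc n (ltnW nM) In; exists a.
    by apply: filterS Ha => x H Anx; rewrite /h' (GA n x) // mulr0 subr0 H.
  - rewrite (TlS' IM); apply: filterS2 hb hT => x H1 H2 [AMx|Tx].
      rewrite /h' H1 // GAM // mulr1; move: ex0; rewrite mulrDr mulr1 => ex0.
      lra.
    rewrite /h' H2 // GB; last by right.
    by rewrite mulrN opprK.
  - under eq_integral do rewrite /h' EFinB.
    rewrite integralB_EFin //; first last.
    + exact: integrableS ixG.
    + exact: integrableS ih.
    rewrite hCint.
    under eq_integral do rewrite EFinM.
    rewrite integralZl //; last exact: integrableS (int_bnd mG bG).
    have -> : (\int[mu]_(x in C) (G x)%:E = (- r)%:E * mu C)%E.
      rewrite -integral_cst //; apply: eq_integral => x /set_mem Cx.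
      by rewrite GB //; left.
    rewrite -(fineK (mfinnum' mC')) -!EFinM -EFinB; congr EFin.
    ring.
apply: (Zae_eq (Zae_add Zh' (Zae_scale x0 G ZG))) => x.
by rewrite /h' subrK.
Qed.

End ZSec.



Section FSec.
Context (d : measure_display) (T : measurableType d) (R : realType).
Variable mu : {measure set T -> \bar R}.
Variables (N : option nat) (A : nat -> set T) (Z : set (T -> R)).
Hypothesis mufin : (mu setT < +oo)%E.
Hypothesis mupos : (0 < mu setT)%E.
Hypothesis hatom : forall n, atom_idx N n -> is_atom mu (A n).
Hypothesis hdisj : forall n m, atom_idx N n -> atom_idx N m -> n <> m -> A n `&` A m = set0.
Local Notation C := (@Cset d T N A).
Local Notation TL := (@Tl d T N A).
Hypothesis hZlinf : forall z, Z z -> Linf_fun mu z.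
Hypothesis hZ0 : Z (fun _ => 0).
Hypothesis hZadd : forall z1 z2, Z z1 -> Z z2 -> Z (fun x => z1 x + z2 x).
Hypothesis hZscale : forall (a : R) z, Z z -> Z (fun x => a * z x).
Hypothesis hZC : forall f, Linf_fun mu f -> (forall x, ~ C x -> f x = 0) ->
     (\int[mu]_x (f x)%:E = 0)%E -> exists2 z, Z z & ae_equal mu z f.
Hypothesis hZgen : forall n, atom_idx N n -> (0 < mu (C `|` TL n.+1))%E ->
     exists2 z, Z z & ae_equal mu z
       (fun x => \1_(A n) x - fine (mu (A n)) / fine (mu (C `|` TL n.+1)) * \1_(C `|` TL n.+1) x).

Local Notation bnd := (@bnd d T R).
Local Notation Zae := (@Zae d T R mu Z).
Let mfin' {X} (mX : measurable X) := @mfin _ _ _ mu mufin X mX.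
Let mfinnum' {X} (mX : measurable X) := @mfinnum _ _ _ mu mufin X mX.
Let mC' := @mC d T R mu N A hatom.
Let mTl' := @mTl d T R mu N A hatom.
Let mA' := @mA d T R mu N A hatom.
Let ATl' {n M x} := @ATl d T N A hdisj n M x.
Let int_bnd' {h} := @int_bnd d T R mu mufin h.
Let PM' := @PM d T R mu N A Z mufin mupos hatom hdisj hZadd hZscale hZC hZgen.

Lemma ind_ge0 (X : set T) x : 0 <= \1_X x :> R.
Proof. by rewrite indicE; case: (_ \in _); rewrite ?ler01 ?lexx. Qed.
Lemma ind_le1 (X : set T) x : \1_X x <= 1 :> R.
Proof. by rewrite indicE; case: (_ \in _); rewrite ?ler01 ?lexx. Qed.

Lemma bnd_cst (r : R) : bnd (fun _ : T => r).
Proof. by exists `|r|. Qed.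

Lemma bnd_bounded (h : T -> R) (D : set T) : bnd h -> [bounded h x | x in D].
Proof.
move=> [M hM]; rewrite /bounded_near; near=> M'.
move=> x _ /=; apply: (le_trans (hM x)); near: M'.
apply: nbhs_pinfty_ge; exact: num_real.
Unshelve. all: by end_near.
Qed.

Lemma int_Mbnd {h g : T -> R} {D} : measurable D -> measurable_fun D h -> bnd h ->
  mu.-integrable D (EFin \o g) -> mu.-integrable D (EFin \o (fun x => h x * g x)).
Proof.
move=> mD mh bh ig; have := integrableMr mD mh (@bnd_bounded h D bh) ig.
by apply: eq_integrable => // x _ /=; rewrite EFinM.
Qed.

Lemma RintE D f : measurable D -> mu.-integrable D (EFin \o f) ->
  (\int[mu]_(x in D) (f x)%:E)%E = (Rintegral mu D f)%:E.
Proof. by move=> mD If; rewrite /Rintegral fineK //; exact: integrable_fin_num. Qed.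

Lemma main_pos f : Linf_fun mu f -> (\int[mu]_x (f x)%:E = 0)%E ->
  weakstar_closure mu Z f.
Proof.
move=> [mf [K0 hK0]] f0 k g e e0 ig.
set K := `|K0|.
pose fc x := Num.max (- K) (Num.min K (f x)).
have mfc : measurable_fun setT fc.
  by have := measurable_maxr (measurable_cst (- K)) (measurable_minr (measurable_cst K) mf).
have Kge0 : 0 <= K by rewrite normr_ge0.
have fcK x : `|fc x| <= K.
  rewrite ler_norml /fc le_max lexx /= ge_max ge_min lexx /= andbT.
  lra.
have bfc : bnd fc by exists K.
have aefc : {ae mu, forall x, f x = fc x}.
  apply: filterS hK0 => x hx; have : `|f x| <= K by apply: le_trans hx (ler_norm _).
  rewrite ler_norml => /andP[h1 h2].
  by rewrite /fc min_r // max_r.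
have ifc := int_bnd' mfc bfc.
have mg i : measurable_fun setT (g i) by apply/measurable_EFinP; exact: measurable_int (ig i).
have fc0 : Rintegral mu setT fc = 0.
  rewrite /Rintegral (ae_eq_integral (fun x => (f x)%:E)) ?f0 //.
  - exact/measurable_EFinP.
  - exact/measurable_EFinP.
  - by apply: filterS aefc => x -> .
set c := Rintegral mu C fc / fine (mu C).
set Kc := K + `|c|.
have Kc0 : 0 <= Kc by rewrite addr_ge0.
set muT := fine (mu setT).
have muT0 : 0 < muT by rewrite fine_gt0 // mupos mufin.
pose Gi i := Rintegral mu setT (fun x => `|g i x|).
have Gi0 i : 0 <= Gi i by apply: Rintegral_ge0 => x _.
pose eps1 := e / (2 * (Kc + 1)).
have eps10 : 0 < eps1 by rewrite divr_gt0 // mulr_gt0 // ltr_wpDl.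
pose eta i := e * muT / (2 * (Kc + 1) * (Gi i + 1)).
have eta0 i : 0 < eta i.
  by rewrite divr_gt0 ?mulr_gt0 // ?ltr_wpDl // ?ltr_wpDl.
have ev i : \forall M \near \oo, (Rintegral mu (TL M) (fun x => `|g i x|) < eps1)
    /\ (mu (TL M) < (eta i)%:E)%E.
  have [d0 [d00 Hd]] := integral_normr_continuous (ig i) eps10.
  have m0 : 0 < Num.min d0 (eta i) by rewrite lt_min d00 eta0.
  apply: filterS (@Tl_small d T R mu N A mufin hatom hdisj _ m0) => M HM; split.
    apply: Hd (mTl' M) _; apply: lt_le_trans HM _; rewrite lee_fin ge_min lexx //.
  by apply: lt_le_trans HM _; rewrite lee_fin ge_min lexx orbT.
have [M0 _ HM] := filter_forall _ ev.
have {HM} HM := HM M0 (leqnn M0).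
set Tm := TL M0.
have mTm : measurable Tm := mTl' M0.
pose psi x := (fc x - c) * \1_Tm x.
have mpsi : measurable_fun setT psi.
  have := measurable_funM (measurable_funB mfc (measurable_cst c)) (measurable_indic mTm).
  by [].
have bpsi x : `|psi x| <= Kc * \1_Tm x.
  rewrite /psi normrM (ger0_norm (ind_ge0 _ _)) ler_wpM2r ?ind_ge0 //.
  by rewrite (le_trans (ler_normB _ _)) // lerD2r.
have bpsi' : bnd psi.
  exists Kc => x; apply: (le_trans (bpsi x)).
  by rewrite -[leRHS]mulr1 ler_wpM2l // ind_le1.
have ipsi := int_bnd' mpsi bpsi'.
set J := Rintegral mu setT psi.
set ga := - J / muT.
pose phi x := psi x + ga.
pose h x := fc x - phi x.
have mphi : measurable_fun setT phi.
  by have := measurable_funD mpsi (measurable_cst ga).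
have bphi : bnd phi.
  by case: bpsi' => K1 hK1; exists (K1 + `|ga|) => x; rewrite (le_trans (ler_normD _ _)) // lerD2r.
have mh : measurable_fun setT h by have := measurable_funB mfc mphi.
have bh : bnd h.
  by case: bphi => K1 hK1; exists (K + K1) => x; rewrite (le_trans (ler_normB _ _)) // lerD.
have ih := int_bnd' mh bh.
have icst : forall D r, measurable D -> mu.-integrable D (EFin \o (fun _ : T => r)).
  move=> D r mD; apply: integrableS measurableT mD (subsetT _) _.
  by apply: int_bnd'; [exact: measurable_cst | exists `|r|].
have Zh : Zae h.
  apply: (PM' M0 h mh bh _ _ (c - ga)).
  - rewrite RintE //; congr EFin.
    rewrite /h RintegralB //; last exact: int_bnd'.
    rewrite fc0 /phi RintegralD //; last exact: icst.
    rewrite Rintegral_cst // -/J -/muT /ga.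
    have mT0 : muT != 0 by rewrite gt_eqF.
    by field.
  - move=> n nM In; have [a Ha] := @atom_ae_const d T R mu mufin _ _ (hatom n In) mfc.
    exists (a - ga); apply: filterS Ha => x H Anx.
    rewrite /h /phi /psi ind0 ?mulr0 ?add0r ?H //; exact: (ATl' In nM Anx).
  - by apply: aeW => x Tx; rewrite /h /phi /psi ind1 // mulr1; ring.
  - have ihC : mu.-integrable C (EFin \o h) by exact: integrableS ih.
    rewrite RintE //; congr EFin.
    rewrite (eq_Rintegral _ (g := fun x => fc x - ga)); last first.
      move=> x /set_mem Cx; rewrite /h /phi /psi ind0 ?mulr0 ?add0r //.
      by move=> Tx; exact: (@TlC d T N A M0 x Tx Cx).
    rewrite RintegralB //; [|exact: integrableS ifc|exact: icst].
    rewrite Rintegral_cst //.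
    case: (eqVneq (fine (mu C)) 0) => hC; last by rewrite mulrBl /c divfK.
    rewrite hC !mulr0 subr0.
    have C0 : mu C = 0%E by apply/eqP; rewrite -fine_eq0 ?mfinnum' // hC.
    rewrite /Rintegral null_set_integral //; apply/measurable_EFinP.
    exact: measurable_funS mfc.
move: Zh => [z Zz zh]; exists z => // i.
have [mz _] := hZlinf z Zz.
have [hint hmu] := HM i.
have E1 : (\int[mu]_x ((f x - z x) * g i x)%:E = \int[mu]_x (phi x * g i x)%:E)%E.
  apply: ae_eq_integral => //.
  + by apply/measurable_EFinP; have := measurable_funM (measurable_funB mf mz) (mg i).
  + by apply/measurable_EFinP; have := measurable_funM mphi (mg i).
  + rewrite /ae_equal in zh; apply: filterS2 aefc zh => x e1 e2 _ /=.
    by rewrite e1 e2 /h opprB addrCA subrr addr0.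
have ipg := int_Mbnd measurableT mphi bphi (ig i).
have ipsig := int_Mbnd measurableT mpsi bpsi' (ig i).
rewrite E1 RintE // abse_EFin lte_fin.
rewrite (eq_Rintegral _ (g := fun x => psi x * g i x + ga * g i x)); last first.
  by move=> x _; rewrite /phi mulrDl.
rewrite RintegralD //; last by apply: (int_Mbnd measurableT (measurable_cst ga) _ (ig i)); exists `|ga|.
rewrite RintegralZl //.
set X := Rintegral mu setT (fun x => psi x * g i x).
set Gs := Rintegral mu setT (g i).
set t := Rintegral mu Tm (fun x => `|g i x|).
have ig' : mu.-integrable setT (EFin \o (fun x => `|g i x|)) := integrable_norm (ig i).
have bind : bnd (\1_Tm) by exists 1 => x; exact: indb.
have iTg := int_Mbnd measurableT (measurable_indic mTm) bind ig'.
have eTg : t = Rintegral mu setT (fun x => \1_Tm x * `|g i x|).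
  rewrite /t Rintegral_mkcond; apply: eq_Rintegral => x _.
  by rewrite patchE indicE; case: (x \in Tm); rewrite ?mul1r ?mul0r.
have hX : `|X| <= Kc * t.
  apply: (le_trans (le_normr_Rintegral _ _)) => //.
  rewrite eTg -RintegralZl //; apply: le_Rintegral => //.
  - by have := integrable_norm ipsig.
  - exact: (int_Mbnd measurableT (measurable_cst Kc) (bnd_cst Kc) iTg).
  - move=> x _; rewrite normrM mulrA ler_wpM2r //; exact: bpsi.
have hJ : `|J| <= Kc * fine (mu Tm).
  apply: (le_trans (le_normr_Rintegral _ _)) => //.
  have -> : fine (mu Tm) = Rintegral mu setT (\1_Tm) by rewrite /Rintegral int_indic.
  rewrite -RintegralZl //; last exact: int_ind.
  apply: le_Rintegral => //.
  - by have := integrable_norm ipsi.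
  - exact: (int_Mbnd measurableT (measurable_cst Kc) (bnd_cst Kc) (@int_ind d T R mu mufin _ mTm)).
  - move=> x _; exact: bpsi.
have t0 : 0 <= t by apply: Rintegral_ge0.
have hs : fine (mu Tm) < eta i by rewrite -lte_fin fineK ?mfinnum'.
have hGs : `|Gs| <= Gi i by exact: le_normr_Rintegral.
have muTn : muT != 0 by rewrite gt_eqF.
have K1 : Kc + 1 != 0 by rewrite gt_eqF // ltr_wpDl.
have G1 : Gi i + 1 != 0 by rewrite gt_eqF // ltr_wpDl.
have hga : `|ga| * muT = `|J|.
  by rewrite /ga normrM normrN normfV (gtr0_norm muT0) divfK.
have step1 : `|X| < e / 2.
  have e1 : (Kc + 1) * eps1 = e / 2 by rewrite /eps1; field.
  apply: (le_lt_trans hX); apply: (le_lt_trans (ler_wpM2l Kc0 (ltW hint))).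
  by rewrite -e1 ltr_pM2r // ltrDl.
have step2 : `|ga| <= e / (2 * (Gi i + 1)).
  rewrite -(ler_pM2r muT0) hga; apply: (le_trans hJ).
  have e2 : (Kc + 1) * eta i = e / (2 * (Gi i + 1)) * muT.
    by rewrite /eta; field; rewrite G1 K1.
  rewrite -e2; apply: (le_trans (ler_wpM2l Kc0 (ltW hs))).
  by rewrite ler_wpM2r ?lerDl // ltW // eta0.
have step3 : `|ga * Gs| < e / 2.
  rewrite normrM; apply: (le_lt_trans (ler_wpM2l (normr_ge0 _) hGs)).
  apply: (le_lt_trans (ler_wpM2r (Gi0 i) step2)).
  have e3 : e / (2 * (Gi i + 1)) * (Gi i + 1) = e / 2 by field.
  rewrite -e3 ltr_pM2l ?ltrDl //.
  by rewrite divr_gt0 // mulr_gt0 // ltr_wpDl.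
apply: (le_lt_trans (ler_normD _ _)); lra.
Qed.
End FSec.

Theorem lemma2p1 (d : measure_display) (T : measurableType d) (R : realType)
  (mu : {measure set T -> \bar R})
  (N : option nat) (A : nat -> set T) (Z : set (T -> R)) :
  (mu setT < +oo)%E ->
  (* the atoms A_n, n in the index set, are pairwise disjoint atoms *)
  (forall n, atom_idx N n -> is_atom mu (A n)) ->
  (forall n m, atom_idx N n -> atom_idx N m -> n <> m -> A n `&` A m = set0) ->
  (* arranged in decreasing order of measure *)
  (forall n, atom_idx N n.+1 -> (mu (A n.+1) <= mu (A n))%E) ->
  let C := ~` \bigcup_(n in [set n | atom_idx N n]) A n in
  (* they are all the atoms: C contains no atom *)
  (forall E, E `<=` C -> ~ is_atom mu E) ->
  let B := fun n => C `|` \bigcup_(j in [set j | atom_idx N j /\ (n < j)%N]) A j in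
  (* Z is a linear subspace of L_infty(mu) *)
  (forall z, Z z -> Linf_fun mu z) ->
  Z (fun _ => 0) ->
  (forall z1 z2, Z z1 -> Z z2 -> Z (fun x => z1 x + z2 x)) ->
  (forall (a : R) z, Z z -> Z (fun x => a * z x)) ->
  (* Z contains L^0_infty(C, mu) *)
  (forall f, Linf_fun mu f -> (forall x, ~ C x -> f x = 0) ->
     (\int[mu]_x (f x)%:E = 0)%E -> exists2 z, Z z & ae_equal mu z f) ->
  (* Z contains 1_{A_n} - mu(A_n)/mu(B_n) 1_{B_n} whenever mu(B_n) > 0 *)
  (forall n, atom_idx N n -> (0 < mu (B n))%E ->
     exists2 z, Z z & ae_equal mu z
       (fun x => \1_(A n) x - fine (mu (A n)) / fine (mu (B n)) * \1_(B n) x)) ->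
  (* conclusion: L^0_infty is contained in the weak* closure of Z *)
  forall f, Linf_fun mu f -> (\int[mu]_x (f x)%:E = 0)%E ->
    weakstar_closure mu Z f.
Proof.
move=> mufin hatom hdisj _ C _ B hZlinf hZ0 hZadd hZscale hZC hZgen f Lf f0.
case: (eqVneq (mu setT) 0%E) => mu0.
  move=> k g e e0 ig; exists (fun _ => 0) => // i.
  have [mf _] := Lf.
  have mg : measurable_fun setT (g i).
    by apply/measurable_EFinP; exact: measurable_int (ig i).
  rewrite null_set_integral //; first by rewrite abse0 lte_fin.
  apply/measurable_EFinP.
  by have := measurable_funM (measurable_funB mf (measurable_cst (0:R))) mg.
have mupos : (0 < mu setT)%E by rewrite lt_neqAle eq_sym mu0 measure_ge0.
by apply: (@main_pos d T R mu N A Z); eassumption.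
Qed.
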